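(* A subspace $\mathcal{U}$ of $\mathbb{R}^n$ is not realizable if and only if there is a diagonal $n\times n$ matrix $D$ with $\operatorname{tr}(D)>0$ and $v^TDv\le 0$ for all $v\in\mathcal{U}^\perp$.
   Context: A correlation matrix is a positive semidefinite matrix with all diagonal entries equal to $1$. A subspace $\mathcal{U}\subseteq\mathbb{R}^n$ is realizable if there is an $n\times n$ correlation matrix whose nullspace contains $\mathcal{U}$. *)

(* Defs.v *)
From HB Require Import structures.
From mathcomp Require Import all_boot all_order all_algebra.
From mathcomp Require Import reals.
Set Implicit Arguments. Unset Strict Implicit. Unset Printing Implicit Defensive.
Import Order.TTheory GRing.Theory Num.Theory.
Local Open Scope ring_scope.

(* Subspaces of R^n are represented (mxalgebra style) as row spaces of
   matrices U : 'M[R]_(m, n); vectors are row vectors 'rV[R]_n, and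
   v \in U means (v <= U)%MS. *)

Definition psd (R : realFieldType) (n : nat) (A : 'M[R]_n) : Prop :=
  A^T = A /\ forall x : 'rV[R]_n, 0 <= (x *m A *m x^T) 0 0.

Definition correlation_matrix (R : realFieldType) (n : nat) (C : 'M[R]_n) : Prop :=
  psd C /\ forall i : 'I_n, C i i = 1.

Definition in_nullspace (R : realFieldType) (n : nat) (C : 'M[R]_n) (x : 'rV[R]_n) : Prop :=
  C *m x^T = 0.

Definition realizable (R : realFieldType) (m n : nat) (U : 'M[R]_(m, n)) : Prop :=
  exists C : 'M[R]_n, correlation_matrix C /\
    forall u : 'rV[R]_n, (u <= U)%MS -> in_nullspace C u.

Definition in_orth_compl (R : realFieldType) (m n : nat) (U : 'M[R]_(m, n)) (v : 'rV[R]_n) : Prop :=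
  forall u : 'rV[R]_n, (u <= U)%MS -> (u *m v^T) 0 0 = 0.

(* Main.v *)
Require Import Defs.
From HB Require Import structures.
From mathcomp Require Import all_boot all_order all_algebra.
From mathcomp Require Import reals.
From mathcomp Require Import boolp classical_sets topology normedtype derive matrix_normedtype.
From mathcomp Require Import ring lra.
Set Implicit Arguments. Unset Strict Implicit. Unset Printing Implicit Defensive.
Import Order.TTheory GRing.Theory Num.Theory.
Import numFieldTopology.Exports numFieldNormedType.Exports.
Local Open Scope ring_scope.

Lemma qf_delta (R : realType) n (C : 'M[R]_n) (i j : 'I_n) :
  ((delta_mx 0 i : 'rV_n) *m C *m (delta_mx 0 j : 'rV_n)^T) 0 0 = C i j.
Proof. by rewrite -rowE trmx_delta -colE !mxE. Qed.

Lemma mx11M (R : realType) n (y : 'rV[R]_n) (z : 'cV[R]_n) :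
  (y *m z) 0 0 = \sum_k y 0 k * z k 0.
Proof. by rewrite mxE. Qed.

Lemma qf_expand (R : realType) n (C : 'M[R]_n) (y z : 'rV[R]_n) t :
  ((y + t *: z) *m C *m (y + t *: z)^T) 0 0 =
  (y *m C *m y^T) 0 0 + t * ((y *m C *m z^T) 0 0 + (z *m C *m y^T) 0 0)
  + t ^+ 2 * (z *m C *m z^T) 0 0.
Proof.
rewrite linearD linearZ /= !mulmxDl !mulmxDr -!scalemxAl -!scalemxAr !mxE.
by rewrite expr2; ring.
Qed.

Lemma qf_sym (R : realType) n (C : 'M[R]_n) (y z : 'rV[R]_n) : C^T = C ->
  (z *m C *m y^T) 0 0 = (y *m C *m z^T) 0 0.
Proof.
move=> sC; have -> : y *m C *m z^T = (z *m C *m y^T)^T.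
  by rewrite !trmx_mul trmxK sC mulmxA.
by rewrite [RHS]mxE.
Qed.

Lemma psd_diag_ge0 (R : realType) n (C : 'M[R]_n) i : psd C -> 0 <= C i i.
Proof. by case=> _ /(_ (delta_mx 0 i)); rewrite qf_delta. Qed.

Lemma mul11E (R : realType) p q (P : 'M[R]_(p,1)) (Q : 'M[R]_(1,q)) i j :
  (P *m Q) i j = P i 0 * Q 0 j.
Proof. by rewrite mxE big_ord1. Qed.

Lemma mxBE (R : realType) p q (A B : 'M[R]_(p,q)) i j : (A - B) i j = A i j - B i j.
Proof. by rewrite !mxE. Qed.

Lemma mxDE (R : realType) p q (A B : 'M[R]_(p,q)) i j : (A + B) i j = A i j + B i j.
Proof. by rewrite !mxE. Qed.

Lemma mxZE (R : realType) p q a (A : 'M[R]_(p,q)) i j : (a *: A) i j = a * A i j.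
Proof. by rewrite !mxE. Qed.

Lemma diag_qf (R : realType) n (D : 'M[R]_n) (v : 'rV[R]_n) : is_diag_mx D ->
  (v *m D *m v^T) 0 0 = \sum_i D i i * (v 0 i) ^+ 2.
Proof.
move=> /is_diag_mxP dD; rewrite mxE; apply: eq_bigr => i _.
rewrite mxE (bigD1 i) //= big1 ?addr0 => [|j ji]; last first.
  by rewrite dD ?mulr0 //; apply: contra ji => /eqP h; apply/eqP/val_inj.
by rewrite !mxE expr2; ring.
Qed.

Lemma schur_psd (R : realType) n (C : 'M[R]_n) (i : 'I_n) : psd C -> 0 < C i i ->
  psd (C - (C i i)^-1 *: (((delta_mx 0 i : 'rV_n) *m C)^T *m ((delta_mx 0 i : 'rV_n) *m C))).
Proof.
move=> [sC pC] Cpos; set e : 'rV_n := delta_mx 0 i; set a := (C i i)^-1.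
split.
  by rewrite linearB /= linearZ /= trmx_mul trmxK sC.
move=> y.
have hb : (y *m ((e *m C)^T *m (e *m C)) *m y^T) 0 0 = ((y *m C *m e^T) 0 0) ^+ 2.
  have -> : y *m ((e *m C)^T *m (e *m C)) *m y^T = (y *m (e *m C)^T) *m (e *m C *m y^T).
    by rewrite !mulmxA.
  rewrite mul11E expr2; congr (_ * _).
    by rewrite trmx_mul sC mulmxA.
  by rewrite qf_sym.
rewrite mulmxBr mulmxBl mxBE -scalemxAr -scalemxAl mxZE hb.
set b := (y *m C *m e^T) 0 0.
have := pC (y + (- (a * b)) *: e).
rewrite qf_expand qf_delta (@qf_sym _ _ _ y e sC) -/b.
have aC : a * C i i = 1 by rewrite mulVf // gt_eqF.
have -> : (y *m C *m y^T) 0 0 + - (a * b) * (b + b) + (- (a * b)) ^+ 2 * C i i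
   = (y *m C *m y^T) 0 0 - a * b ^+ 2 * (2 - a * C i i).
  by ring.
by rewrite aC (_ : (2:R) - 1 = 1) ?mulr1 //; ring.
Qed.

Lemma key_easy (R : realType) n m (U : 'M[R]_(m,n)) (D : 'M[R]_n) :
  (forall v, in_orth_compl U v -> \sum_i D i i * (v 0 i) ^+ 2 <= 0) ->
  forall k (C : 'M[R]_n), psd C -> (forall u, (u <= U)%MS -> in_nullspace C u) ->
  (#|[set i | C i i != 0%R]| <= k)%N -> \sum_i D i i * C i i <= 0.
Proof.
move=> hD; elim=> [|k IH] C psdC nC.
  rewrite leqn0 cards_eq0 => /eqP S0; rewrite big1 // => i _.
  have : i \notin [set i | C i i != 0] by rewrite S0 inE.
  by rewrite inE negbK => /eqP ->; rewrite mulr0.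
move=> Hk.
case: (pickP (fun i => C i i != 0)) => [i Ci0 | all0]; last first.
  rewrite big1 // => i _; have := all0 i; rewrite /= => /negbFE/eqP ->.
  by rewrite mulr0.
have Cpos : 0 < C i i by rewrite lt_def Ci0 psd_diag_ge0.
have sC : C^T = C := psdC.1.
pose e : 'rV[R]_n := delta_mx 0 i; pose c := e *m C; pose a := (C i i)^-1.
have psdC' := @schur_psd _ _ C i psdC Cpos; rewrite -/e -/c -/a in psdC'.
set C' := C - _ in psdC'.
have cj j : c 0 j = C i j by rewrite /c /e -rowE mxE.
have C'E j l : C' j l = C j l - a * (C i j * C i l).
  by rewrite /C' mxBE mxZE mul11E mxE !cj.
have aC : a * C i i = 1 by rewrite mulVf // gt_eqF.
have apos : 0 < a by rewrite invr_gt0.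
have nC' : forall u, (u <= U)%MS -> in_nullspace C' u.
  move=> u uU; rewrite /in_nullspace /C' mulmxBl -scalemxAl -mulmxA.
  have -> : c *m u^T = 0 by rewrite /c -mulmxA nC // mulmx0.
  by rewrite mulmx0 scaler0 subr0; exact: nC.
have corth : in_orth_compl U c.
  move=> u uU; rewrite /c trmx_mul sC mulmxA.
  have -> : u *m C = 0.
    by rewrite -[u *m C]trmxK trmx_mul sC (nC u uU) trmx0.
  by rewrite mul0mx mxE.
have hsplit : \sum_j D j j * C j j =
   \sum_j D j j * C' j j + a * \sum_j D j j * (c 0 j) ^+ 2.
  rewrite mulr_sumr -big_split /=; apply: eq_bigr => j _.
  by rewrite C'E cj; ring.
rewrite hsplit -[X in _ <= X](addr0 (0:R)); apply: lerD; last first.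
  by rewrite pmulr_rle0 //; apply: hD.
apply: IH => //.
have sub : [set j | C' j j != 0] \subset [set j | C j j != 0] :\ i.
  apply/fintype.subsetP => j; rewrite !inE => Cj0.
  have hji : j != i.
    by apply: contra Cj0 => /eqP ->; rewrite C'E mulrA aC mul1r subrr.
  rewrite hji /=; apply: contra Cj0 => /eqP Cjj.
  have h1 : C' j j <= 0.
    by rewrite C'E Cjj sub0r oppr_le0 mulr_ge0 ?(ltW apos) // -expr2 sqr_ge0.
  by rewrite eq_le h1 psd_diag_ge0.
rewrite -ltnS; apply: leq_trans Hk; apply: leq_ltn_trans (subset_leq_card sub) _.
by rewrite [X in (_ < X)%N](cardsD1 i) inE Ci0.
Qed.
Local Open Scope classical_set_scope.
Lemma cont_sum (T : topologicalType) (R : realType) (I : Type) (r : seq I)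
  (F : I -> T -> R) : (forall i, continuous (F i)) ->
  continuous (fun x => \sum_(i <- r) F i x).
Proof.
move=> hF; elim: r => [|a r IH].
  under eq_fun do rewrite big_nil; exact: cst_continuous.
under eq_fun do rewrite big_cons.
by move=> x; apply: cvgD; [exact: hF | exact: IH].
Qed.

Lemma cont_mul (T : topologicalType) (R : realType) (f g : T -> R) :
  continuous f -> continuous g -> continuous (fun x => f x * g x).
Proof. by move=> cf cg x; apply: cvgM; [exact: cf | exact: cg]. Qed.

Lemma cont_sub (T : topologicalType) (R : realType) (f g : T -> R) :
  continuous f -> continuous g -> continuous (fun x => f x - g x).
Proof. by move=> cf cg x; apply: cvgB; [exact: cf | exact: cg]. Qed.

Definition econt (T : topologicalType) (R : realType) p q (F : T -> 'M[R]_(p,q)) :=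
  forall i j, continuous (fun x => F x i j).

Lemma econt_mull (T : topologicalType) (R : realType) a p q (y : 'M[R]_(a,p))
  (F : T -> 'M[R]_(p,q)) : econt F -> econt (fun x => y *m F x).
Proof.
move=> hF i j; under eq_fun do rewrite mxE.
apply: cont_sum => k; apply: cont_mul => //; exact: cst_continuous.
Qed.

Lemma econt_mulr (T : topologicalType) (R : realType) a p q (z : 'M[R]_(q,a))
  (F : T -> 'M[R]_(p,q)) : econt F -> econt (fun x => F x *m z).
Proof.
move=> hF i j; under eq_fun do rewrite mxE.
apply: cont_sum => k; apply: cont_mul => //; exact: cst_continuous.
Qed.

Lemma econt_cst (T : topologicalType) (R : realType) p q (M : 'M[R]_(p,q)) :
  econt (fun _ : T => M).
Proof. by move=> i j; exact: cst_continuous. Qed.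

Lemma econt_vec (R : realType) p q :
  econt (fun x : 'rV[R]_(p * q) => vec_mx x).
Proof.
move=> i j; under eq_fun do rewrite mxE; exact: coord_continuous.
Qed.

Lemma closed_eqf (T : topologicalType) (R : realType) (f g : T -> R) :
  continuous f -> continuous g -> closed [set x | f x = g x].
Proof.
move=> cf cg.
have -> : [set x | f x = g x] = (fun x => f x - g x) @^-1` [set r : R | r = 0].
  rewrite predeqE => x /=; split => [->|/eqP]; first by rewrite subrr.
  by rewrite subr_eq0 => /eqP.
apply: preimage_closed; last exact: closed_eq.
by move=> x _; apply: cont_sub.
Qed.

Lemma closed_lef (T : topologicalType) (R : realType) (f g : T -> R) :
  continuous f -> continuous g -> closed [set x | f x <= g x].
Proof.
move=> cf cg.
have -> : [set x | f x <= g x] = (fun x => g x - f x) @^-1` [set r : R | 0 <= r].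
  by rewrite predeqE => x /=; rewrite subr_ge0.
apply: preimage_closed; last exact: closed_ge.
by move=> x _; apply: cont_sub.
Qed.

Lemma closed_forall (T : topologicalType) (I : Type) (P : I -> T -> Prop) :
  (forall i, closed [set x | P i x]) -> closed [set x | forall i, P i x].
Proof.
move=> h.
have -> : [set x | forall i, P i x] = \bigcap_(i in setT) [set x | P i x].
  by rewrite predeqE => x; split => [h' i _|h' i]; [exact: h' | exact: h'].
by apply: closed_bigI => i _; exact: h.
Qed.

Lemma closed_imp (T : topologicalType) (H : Prop) (P : T -> Prop) :
  closed [set x | P x] -> closed [set x | H -> P x].
Proof.
move=> cP; have [h|nh] := pselect H.
  have -> : [set x | H -> P x] = [set x | P x].
    by rewrite predeqE => x; split => [hx|hx _]; [exact: hx h | exact: hx].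
  by [].
have -> : [set x | H -> P x] = setT.
  by rewrite predeqE => x; split => // _ /nh.
exact: closedT.
Qed.

Lemma closed_eqmx (T : topologicalType) (R : realType) p q (F G : T -> 'M[R]_(p,q)) :
  econt F -> econt G -> closed [set x | F x = G x].
Proof.
move=> cF cG.
have -> : [set x | F x = G x] = [set x | forall i j, F x i j = G x i j].
  rewrite predeqE => x; split => [e i j|h]; first by rewrite e.
  by apply/matrixP => i j; exact: h.
apply: closed_forall => i; apply: closed_forall => j; exact: closed_eqf.
Qed.

Lemma psd_entry_bound (R : realType) n (C : 'M[R]_n) (i j : 'I_n) (M : R) :
  psd C -> C i i <= M -> C j j <= M -> `|C i j| <= M.
Proof.
move=> [sC pC] hi hj.
have cji : C j i = C i j by rewrite -[in RHS]sC mxE.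
have h t := pC ((delta_mx 0 i : 'rV_n) + t *: delta_mx 0 j).
have h1 := h 1; have h2 := h (-1).
rewrite qf_expand !qf_delta cji in h1; rewrite qf_expand !qf_delta cji in h2.
rewrite ler_norml; apply/andP; split; nra.
Qed.

Lemma first_order (R : realType) n (c e : 'I_n -> R) (eps : R) : 0 < eps ->
  (forall s, 0 < s -> s <= eps ->
     \sum_i (c i - 1) ^+ 2 <= \sum_i (c i + s * e i - 1) ^+ 2) ->
  0 <= \sum_i (c i - 1) * e i.
Proof.
move=> eps0 h; set a := \sum_i (c i - 1) * e i; set b := \sum_i e i ^+ 2.
have b0 : 0 <= b by apply: sumr_ge0 => i _; exact: sqr_ge0.
have hs s : \sum_i (c i + s * e i - 1) ^+ 2 = \sum_i (c i - 1) ^+ 2 + s * (2 * a + s * b).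
  transitivity (\sum_i ((c i - 1) ^+ 2 + s * (2 * ((c i - 1) * e i) + s * e i ^+ 2))).
    by apply: eq_bigr => i _; ring.
  rewrite big_split /=; congr (_ + _); rewrite -mulr_sumr; congr (_ * _).
  by rewrite big_split /= -!mulr_sumr.
rewrite leNgt; apply/negP => aneg.
pose s := Num.min eps (- a / (b + 1)).
have b1 : 0 < b + 1 by lra.
have q0 : 0 < - a / (b + 1) by rewrite divr_gt0 // oppr_gt0.
have s0 : 0 < s by rewrite lt_min eps0 q0.
have se : s <= eps by rewrite ge_min lexx.
have sq : s <= - a / (b + 1) by rewrite ge_min lexx orbT.
have sb : s * b <= - a.
  apply: le_trans (ler_wpM2r b0 sq) _.
  have -> : - a / (b + 1) * b = - a - (- a / (b + 1)) by field; lra.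
  lra.
have := h s s0 se; rewrite hs -lerBlDl subrr.
have : s * (2 * a + s * b) < 0 by rewrite pmulr_rlt0 //; lra.
lra.
Qed.

Lemma exists_min (R : realType) n m (U : 'M[R]_(m,n)) (M : R) : 0 <= M ->
  exists C : 'M[R]_n, [/\ psd C, (forall u, (u <= U)%MS -> in_nullspace C u),
    (forall i, C i i <= M) &
    forall C2, psd C2 -> (forall u, (u <= U)%MS -> in_nullspace C2 u) ->
      (forall i, C2 i i <= M) ->
      \sum_i (C i i - 1) ^+ 2 <= \sum_i (C2 i i - 1) ^+ 2].
Proof.
move=> M0.
pose A := [set x : 'rV[R]_(n * n) | psd (vec_mx x) /\
  (forall u, (u <= U)%MS -> in_nullspace (vec_mx x) u) /\ (forall i, vec_mx x i i <= M)].
pose f := fun x : 'rV[R]_(n * n) => \sum_i ((vec_mx x) i i - 1) ^+ 2.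
have A0 : A 0.
  rewrite /A /=.
  have -> : vec_mx (0 : 'rV[R]_(n * n)) = 0 by apply/matrixP => i j; rewrite !mxE.
  split; first by split; [rewrite trmx0 | move=> y; rewrite mulmx0 mul0mx mxE].
  split; first by move=> u _; rewrite /in_nullspace mul0mx.
  by move=> i; rewrite mxE.
have cA : closed A.
  apply: closedI.
    change (closed [set x : 'rV[R]_(n * n) | (vec_mx x)^T = vec_mx x /\
      forall y : 'rV[R]_n, 0 <= (y *m vec_mx x *m y^T) 0 0]).
    apply: closedI.
      apply: closed_eqmx; last exact: econt_vec.
      by move=> i j; under eq_fun do rewrite mxE; exact: econt_vec.
    apply: closed_forall => y; apply: closed_lef; first exact: cst_continuous.
    have hh := (econt_mulr (z:=y^T) (econt_mull (y:=y) (@econt_vec R n n))). exact: (hh ord0 ord0).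
  apply: closedI.
    apply: closed_forall => u; apply: closed_imp.
    rewrite /in_nullspace; apply: closed_eqmx; last exact: econt_cst.
    exact: (econt_mulr (z:=u^T) (@econt_vec R n n)).
  apply: closed_forall => i; apply: closed_lef; last exact: cst_continuous.
  exact: econt_vec.
have bA : bounded_set A.
  exists M; split; first exact: num_real.
  move=> N MN x [psdx [_ dx]].
  rewrite /= /Num.Def.normr /= mx_normrE; apply: bigmax_le; first by rewrite (le_trans M0) // ltW.
  move=> [k l] _ /=; rewrite (ord1 k).
  case/mxvec_indexP: l => i j.
  have -> : x 0 (mxvec_index i j) = vec_mx x i j by rewrite mxE.
  by apply: le_trans (ltW MN); apply: psd_entry_bound.
have cpt : compact A := bounded_closed_compact bA cA.
have cf : {within A, continuous f}.
  apply: continuous_subspaceT; rewrite /f; apply: cont_sum => i.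
  under eq_fun do rewrite expr2.
  by apply: cont_mul; apply: cont_sub; [exact: econt_vec | exact: cst_continuous
     | exact: econt_vec | exact: cst_continuous].
have [c cA' hc] := compact_EVT_min (ex_intro _ 0 A0) cpt cf.
rewrite inE in cA'; case: cA' => [p [nn d]].
exists (vec_mx c); split => // C2 p2 n2 d2.
have := hc (mxvec C2); rewrite /f mxvecK; apply.
by rewrite inE /A /= mxvecK.
Qed.

Lemma psd0 (R : realType) n : psd (0 : 'M[R]_n).
Proof. by split; [rewrite trmx0 | move=> y; rewrite mulmx0 mul0mx mxE]. Qed.

Lemma psd_scale (R : realType) n (C : 'M[R]_n) a : 0 <= a -> psd C -> psd (a *: C).
Proof.
move=> a0 [sC pC]; split; first by rewrite linearZ /= sC.
by move=> y; rewrite -scalemxAr -scalemxAl mxZE mulr_ge0.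
Qed.

Lemma psd_addvv (R : realType) n (C : 'M[R]_n) (v : 'rV[R]_n) s :
  0 <= s -> psd C -> psd (C + s *: (v^T *m v)).
Proof.
move=> s0 [sC pC]; split.
  by rewrite linearD /= linearZ /= trmx_mul trmxK sC.
move=> y; rewrite mulmxDr mulmxDl mxDE -scalemxAr -scalemxAl mxZE.
have -> : y *m (v^T *m v) *m y^T = (y *m v^T) *m (v *m y^T) by rewrite !mulmxA.
rewrite mul11E.
have -> : (v *m y^T) 0 0 = (y *m v^T) 0 0.
  by rewrite -[v *m y^T]trmxK trmx_mul trmxK [LHS]mxE.
by rewrite addr_ge0 // mulr_ge0 // -expr2 sqr_ge0.
Qed.

Lemma diag_sum_ineq (R : realType) n (c : 'I_n -> R) (i : 'I_n) :
  (c i) ^+ 2 <= \sum_j (c j) ^+ 2.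
Proof.
by rewrite (bigD1 i) //= lerDl sumr_ge0 // => j _; exact: sqr_ge0.
Qed.

Local Close Scope classical_set_scope.
Unset Implicit Arguments.

Theorem lemma3p2 (R : realType) (n m : nat) (U : 'M[R]_(m, n)) :
  ~ realizable U <->
  exists D : 'M[R]_n, is_diag_mx D /\ 0 < \tr D /\
    forall v : 'rV[R]_n, in_orth_compl U v -> (v *m D *m v^T) 0 0 <= 0.
Proof.
split; last first.
  move=> [D [dD [trpos hD]]] [C [[psdC diag1] nC]].
  have hD' : forall v, in_orth_compl U v -> \sum_i D i i * (v 0 i) ^+ 2 <= 0.
    by move=> v hv; rewrite -diag_qf //; exact: hD.
  have := @key_easy R n m U D hD' _ C psdC nC (leqnn _).
  under eq_bigr do rewrite diag1 mulr1.
  by move=> h; move: trpos; rewrite /mxtrace ltNge h.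
move=> nreal.
have M0 : (0:R) <= n%:R + 3 by rewrite addr_ge0 // ler0n.
have [C [psdC nC dC hmin]] := exists_min U M0.
have c0 i : 0 <= C i i by exact: psd_diag_ge0.
have cle i : C i i <= n%:R + 2.
  have null0 : forall u, (u <= U)%MS -> in_nullspace (0 : 'M[R]_n) u.
    by move=> u _; rewrite /in_nullspace mul0mx.
  have d0 : forall j, (0 : 'M[R]_n) j j <= n%:R + 3 by move=> j; rewrite mxE.
  have h0 : \sum_i ((0 : 'M[R]_n) i i - 1) ^+ 2 = n%:R.
    under eq_bigr do rewrite mxE sub0r sqrrN expr1n.
    by rewrite sumr_const card_ord.
  have := hmin 0 (psd0 R n) null0 d0; rewrite h0 => h; have := le_trans (diag_sum_ineq (fun j => C j j - 1) i) h => /= h1.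
  have := sqr_ge0 (2 * (C i i - 1) - 1); nra.
have sC : \sum_i (C i i - 1) * C i i = 0.
  apply/eqP; rewrite eq_le; apply/andP; split; last first.
    apply: (@first_order R n (fun i => C i i) (fun i => C i i) (n%:R + 2)^-1).
      by rewrite invr_gt0 ltr_wpDl ?ler0n.
    move=> s s0 se.
    have hs : s * (n%:R + 2) <= 1.
      have n2 : (0:R) < n%:R + 2 by rewrite ltr_wpDl ?ler0n.
      by apply: le_trans (ler_wpM2r (ltW n2) se) _; rewrite mulVf ?lt0r_neq0.
    have d2 : forall i, ((1 + s) *: C) i i <= n%:R + 3.
      move=> i; rewrite mxZE mulrDl mul1r.
      have : s * C i i <= 1.
        by apply: le_trans _ hs; apply: ler_wpM2l; [exact: ltW | exact: cle].
      have := cle i; lra.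
    have n2' : forall u, (u <= U)%MS -> in_nullspace ((1 + s) *: C) u.
      by move=> u uU; rewrite /in_nullspace -scalemxAl (nC u uU) scaler0.
    have p2 : psd ((1 + s) *: C) by apply: psd_scale => //; lra.
    have -> : \sum_i (C i i + s * C i i - 1) ^+ 2 = \sum_i (((1 + s) *: C) i i - 1) ^+ 2.
      by apply: eq_bigr => i _; rewrite mxZE mulrDl mul1r.
    exact: hmin.
  rewrite -oppr_ge0 -sumrN.
  under eq_bigr do rewrite -mulrN.
  apply: (@first_order R n (fun i => C i i) (fun i => - C i i) 1) => // s s0 se.
  have d2 : forall i, ((1 - s) *: C) i i <= n%:R + 3.
    move=> i; rewrite mxZE; have := cle i; have := c0 i; nra.
  have n2' : forall u, (u <= U)%MS -> in_nullspace ((1 - s) *: C) u.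
    by move=> u uU; rewrite /in_nullspace -scalemxAl (nC u uU) scaler0.
  have p2 : psd ((1 - s) *: C) by apply: psd_scale => //; lra.
  have -> : \sum_i (C i i + s * - C i i - 1) ^+ 2 = \sum_i (((1 - s) *: C) i i - 1) ^+ 2.
    by apply: eq_bigr => i _; rewrite mxZE; congr (_ ^+ 2); ring.
  exact: hmin.
have sv : forall v, in_orth_compl U v -> 0 <= \sum_i (C i i - 1) * v 0 i ^+ 2.
  move=> v hv.
  set S := \sum_j v 0 j ^+ 2.
  have S0 : 0 <= S by apply: sumr_ge0 => j _; exact: sqr_ge0.
  apply: (@first_order R n (fun i => C i i) (fun i => v 0 i ^+ 2) (1 + S)^-1).
    by rewrite invr_gt0; lra.
  move=> s s0 se.
  have hs : s * (1 + S) <= 1.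
    have n2 : (0:R) < 1 + S by lra.
    by apply: le_trans (ler_wpM2r (ltW n2) se) _; rewrite mulVf ?lt0r_neq0.
  pose C2 := C + s *: (v^T *m v).
  have C2E i : C2 i i = C i i + s * v 0 i ^+ 2.
    by rewrite /C2 mxDE mxZE mul11E !mxE expr2.
  have d2 : forall i, C2 i i <= n%:R + 3.
    move=> i; rewrite C2E.
    have : s * v 0 i ^+ 2 <= 1.
      apply: le_trans hs; rewrite ler_wpM2l ?ltW //.
      have := diag_sum_ineq (fun j => v 0 j) i; rewrite /= -/S; lra.
    have := cle i; lra.
  have n2' : forall u, (u <= U)%MS -> in_nullspace C2 u.
    move=> u uU; rewrite /in_nullspace /C2 mulmxDl (nC u uU) add0r -scalemxAl -mulmxA.
    have -> : v *m u^T = 0.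
      apply/matrixP => i j; rewrite !ord1 [RHS]mxE.
      by rewrite -[v *m u^T]trmxK trmx_mul trmxK mxE; exact: hv.
    by rewrite mulmx0 scaler0.
  have p2 : psd C2 by apply: psd_addvv => //; exact: ltW.
  have -> : \sum_i (C i i + s * v 0 i ^+ 2 - 1) ^+ 2 = \sum_i (C2 i i - 1) ^+ 2.
    by apply: eq_bigr => i _; rewrite C2E.
  exact: hmin.
exists (diag_mx (\row_i (1 - C i i))); split; first exact: diag_mx_is_diag.
split.
  rewrite mxtrace_diag.
  under eq_bigr do rewrite mxE.
  have -> : \sum_i (1 - C i i) = \sum_i (1 - C i i) ^+ 2 - \sum_i (C i i - 1) * C i i.
    rewrite -sumrB; apply: eq_bigr => i _; ring.
  rewrite sC subr0.
  case: (pickP (fun i => C i i != 1)) => [i ci|h]; last first.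
    exfalso; apply: nreal; exists C; split => //; split => // i.
    by have := h i; move=> /= /negbFE /eqP.
  apply: lt_le_trans (diag_sum_ineq (fun j => 1 - C j j) i).
  by rewrite /= lt_def sqr_ge0 andbT sqrf_eq0 subr_eq0 eq_sym.
move=> v hv; rewrite diag_qf ?diag_mx_is_diag //.
under eq_bigr do rewrite mxE eqxx mulr1n mxE.
rewrite -oppr_ge0 -sumrN.
have := sv v hv; move=> h; apply: le_trans h _; apply: ler_sum => i _.
by rewrite -mulNr opprB.
Qed.
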